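(* Let $(G,\phi)$ be a test-fee structure. If $\phi_t<\int_{\mu+\phi_d}^{\overline{\theta}}[s-(\mu+\phi_d)]\,dG(s)$, then in every equilibrium of the induced game the asset is tested with probability $1$; otherwise, there exists an equilibrium in which the asset is tested with probability $0$.
   Context: The asset value $\theta\sim F$ with support in $[\underline{\theta},\overline{\theta}]$ ($0\le\underline{\theta}<\overline{\theta}<\infty$ the extreme support points) and mean $\mu$. A test-fee structure $(G,\phi)$ consists of $G$, the marginal CDF of scores of an unbiased test (a stochastic map from $\theta$ to a score $s\in[\underline{\theta},\overline{\theta}]$ with $E[\theta\mid s]=s$), and fees $\phi=(\phi_t,\phi_d)\in\mathbb{R}^2$. In the induced game the agent, not observing $\theta$, decides whether to pay testing fee $\phi_t$ and privately observe $s$; then whether to pay disclosure fee $\phi_d$ to verifiably disclose $s$ to two buyers, who otherwise observe a null message $N$ and cannot tell whether a test occurred. Buyers bid in a first-price auction; the agent receives the price minus fees paid. Equilibrium means perfect Bayesian equilibrium (buyers share beliefs, so price equals the asset's conditional expected value). *)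

(* Defs.v *)
From HB Require Import structures.
From mathcomp Require Import all_boot all_order all_algebra.
From mathcomp Require Import all_classical all_reals all_analysis.
Set Implicit Arguments. Unset Strict Implicit. Unset Printing Implicit Defensive.
Import Order.TTheory GRing.Theory Num.Theory.
Local Open Scope classical_set_scope.
Local Open Scope ring_scope.

(* The primitives: a probability space (Omega, P) carrying the asset value
   theta and the test score sc (the test is the joint law of (theta, sc)).
   Strategy profile of the induced game:
   - tau : probability with which the agent tests;
   - dsc : s |-> probability of disclosing score s (after testing);
   - pN  : price (= buyers' common expected value of the asset) after the
           null message N.
   A disclosed score s fetches price E[theta | s] = s (unbiasedness). *)

Section Game.
Context (R : realType) (dd : measure_display) (Omega : measurableType dd)
        (P : probability Omega R) (theta sc : {RV P >-> R})
        (thl thh phit phid : R).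

Definition test_payoff (dsc : R -> R) (pN : R) : \bar R :=
  ((- phit)%:E + \int[P]_w (dsc (sc w) * (sc w - phid)
                            + (1 - dsc (sc w)) * pN)%:E)%E.

Definition prob_null (tau : R) (dsc : R -> R) : \bar R :=
  ((1 - tau)%:E + tau%:E * \int[P]_w (1 - dsc (sc w))%:E)%E.

Definition value_null (tau : R) (dsc : R -> R) : \bar R :=
  ((1 - tau)%:E * \int[P]_w (theta w)%:E
   + tau%:E * \int[P]_w (theta w * (1 - dsc (sc w)))%:E)%E.

Definition equilibrium (tau : R) (dsc : R -> R) (pN : R) : Prop :=
  [/\ 0 <= tau <= 1,
      measurable_fun setT dsc /\ (forall s, 0 <= dsc s <= 1),
      (forall s, thl <= s <= thh ->
          (0 < dsc s -> pN <= s - phid) /\ (dsc s < 1 -> s - phid <= pN)),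
      (0 < tau -> (pN%:E <= test_payoff dsc pN)%E) /\
      (tau < 1 -> (test_payoff dsc pN <= pN%:E)%E) &
      (* buyers' beliefs: supported on [thl, thh], Bayes' rule on path *)
      thl <= pN <= thh /\
      ((0 < prob_null tau dsc)%E ->
          (pN%:E * prob_null tau dsc = value_null tau dsc)%E)].

End Game.

(* Main.v *)
Require Import Defs.
From HB Require Import structures.
From mathcomp Require Import all_boot all_order all_algebra.
From mathcomp Require Import all_classical all_reals all_analysis.
From mathcomp Require Import measurable_realfun ring lra.
Import Order.TTheory GRing.Theory Num.Theory.
Local Open Scope classical_set_scope.
Local Open Scope ring_scope.

Section Helpers.
Context (R : realType) (dd : measure_display) (Omega : measurableType dd)
        (P : probability Omega R) (theta sc : {RV P >-> R}) (thl thh : R).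

Lemma bnd_of (f : Omega -> R) M A : (forall w, `|f w| <= M) -> [bounded f x | x in A].
Proof.
move=> hM; rewrite /bounded_near; near=> M' => t At /=.
apply: le_trans (hM t) _; near: M'; apply: nbhs_pinfty_ge; exact: num_real.
Unshelve. all: by end_near. Qed.

Definition TS := [set w | thl <= sc w <= thh] `&` [set w | thl <= theta w <= thh].

Lemma mset (X : {RV P >-> R}) : measurable [set w | thl <= X w <= thh].
Proof.
have -> : [set w | thl <= X w <= thh] = X @^-1` `[thl, thh].
  by apply/seteqP; split => w /=; rewrite in_itv.
exact: measurable_funPTI.
Qed.

Lemma mTS : measurable TS.
Proof. exact: measurableI (mset sc) (mset theta). Qed.

Hypothesis Ps : P [set w | thl <= sc w <= thh] = 1%E.
Hypothesis Pt : P [set w | thl <= theta w <= thh] = 1%E.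

Lemma PnTS : P (~` TS) = 0%E.
Proof.
apply/eqP; rewrite eq_le measure_ge0 andbT.
rewrite /TS setCI.
apply: (le_trans (measureU2 _ _ _)); [exact: measurableC (mset _)|exact: measurableC (mset _)|].
have h1 : P (~` [set w | thl <= sc w <= thh]) = 0%E.
  by have := probability_setC P (mset sc); rewrite Ps subee.
have h2 : P (~` [set w | thl <= theta w <= thh]) = 0%E.
  by have := probability_setC P (mset theta); rewrite Pt subee.
have H : (P (~` [set w | (thl <= sc w <= thh)%R]) + P (~` [set w | (thl <= theta w <= thh)%R]) <= 0)%E.
  by rewrite h1 h2 adde0.
exact: H.
Qed.

Lemma aeTS (Q : Omega -> Prop) : (forall w, TS w -> Q w) -> \forall w \ae P, Q w.
Proof.
move=> hQ; exists (~` TS); split; [exact: measurableC mTS|exact: PnTS|].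
by move=> w /= nQ Tw; apply: nQ; apply: hQ.
Qed.

Lemma intTS (f : Omega -> R) M : measurable_fun setT f ->
  (forall w, TS w -> `|f w| <= M) -> P.-integrable setT (EFin \o f).
Proof.
move=> mf hM; apply/integrableP; split; first exact/measurable_EFinP.
apply: (@le_lt_trans _ _ (\int[P]_w (cst `|M|%:E) w)%E).
  apply: ae_ge0_le_integral => //.
  - by do 2 apply: measurableT_comp => //.
  - by move=> w _ /=; rewrite lee_fin.
  - apply: aeTS => w Tw _ /=; rewrite lee_fin; apply: le_trans (hM w Tw) _.
    exact: ler_norm.
rewrite integral_cst //; have := probability_setT P; move=> /= ->; by rewrite mule1 ltry.
Qed.

Lemma aeint (f g : Omega -> R) : measurable_fun setT f -> measurable_fun setT g ->
  (forall w, TS w -> f w = g w) ->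
  (\int[P]_w (f w)%:E = \int[P]_w (g w)%:E)%E.
Proof.
move=> mf mg fg; apply: ae_eq_integral => //; try exact/measurable_EFinP.
by apply: aeTS => w Tw _; rewrite fg.
Qed.

Lemma leTS (f g : Omega -> R) : P.-integrable setT (EFin \o f) ->
  P.-integrable setT (EFin \o g) -> (forall w, TS w -> f w <= g w) ->
  (\int[P]_w (f w)%:E <= \int[P]_w (g w)%:E)%E.
Proof.
move=> fi gi fg.
rewrite (negligible_integral (N := ~` TS)) //; last exact: PnTS; last exact: measurableC mTS.
rewrite [leRHS](negligible_integral (N := ~` TS)) //; last exact: PnTS; last exact: measurableC mTS.
rewrite setTD setCK; apply: le_integral; first exact: mTS.
- exact: (integrableS measurableT mTS (@subsetT _ _) fi).
- exact: (integrableS measurableT mTS (@subsetT _ _) gi).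
by move=> w /set_mem Tw; rewrite lee_fin fg.
Qed.

End Helpers.
Lemma ptA (R : realType) (s d pN mu phid : R) : 0 <= d <= 1 -> pN <= mu ->
  (0 < d -> pN <= s - phid) -> (d < 1 -> s - phid <= pN) ->
  pN + (if mu + phid <= s then s - (mu + phid) else 0) <= d * (s - phid) + (1 - d) * pN.
Proof.
move=> /andP[d0 d1] hpm h1 h2.
have [dp|dn] := ltP 0 d; have [dl|dg] := ltP d 1.
- have e1 := h1 dp; have e2 := h2 dl.
  have -> : s = pN + phid by lra.
  case: ifP => _; nra.
- have -> : d = 1 by lra.
  have e1 := h1 dp. case: ifP => _; lra.
- have -> : d = 0 by lra.
  have e2 := h2 dl. case: ifP => hh; lra.
- lra.
Qed.

Lemma bnd_mix (R : realType) (d x y : R) : 0 <= d <= 1 ->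
  `|d * x + (1 - d) * y| <= `|x| + `|y|.
Proof.
move=> /andP[d0 d1]; apply: le_trans (ler_normD _ _) _.
rewrite !normrM (ger0_norm d0) (ger0_norm (_ : 0 <= 1 - d)) ?subr_ge0 //.
apply: lerD.
- by rewrite -[leRHS]mul1r ler_wpM2r.
- by rewrite -[leRHS]mul1r ler_wpM2r // lerBlDr lerDl.
Qed.

Lemma ptC (R : realType) (s q c hv : R) : 0 <= q <= 1 ->
  (s < c -> hv = 1) -> (c < s -> hv = 0) ->
  s * hv <= q * s + c * hv - c * q.
Proof.
move=> /andP[q0 q1] h1 h2.
have [lt|gt|->] := ltgtP s c.
- rewrite (h1 lt); nra.
- rewrite (h2 gt); nra.
- lra.
Qed.

Section Main.
Context (R : realType) (dd : measure_display) (Omega : measurableType dd)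
    (P : probability Omega R) (theta sc : {RV P >-> R})
    (thl thh mu phit phid : R).
Hypothesis thl0 : 0 <= thl.
Hypothesis thlh : thl < thh.
Hypothesis Pt : P [set w | thl <= theta w <= thh] = 1%E.
Hypothesis hmu : (\int[P]_w (theta w)%:E)%E = mu%:E.
Hypothesis Ps : P [set w | thl <= sc w <= thh] = 1%E.
Hypothesis unb : forall B : set R, measurable B ->
     (\int[P]_(w in sc @^-1` B) (theta w)%:E = \int[P]_(w in sc @^-1` B) (sc w)%:E)%E.

Let TS := @TS R dd Omega P theta sc thl thh.
Let iT := @intTS R dd Omega P theta sc thl thh Ps Pt.
Let aeI := @aeint R dd Omega P theta sc thl thh Ps Pt.
Let leT := @leTS R dd Omega P theta sc thl thh Ps Pt.

Lemma msc : measurable_fun setT sc. Proof. by []. Qed.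
Lemma mth : measurable_fun setT theta. Proof. by []. Qed.

Lemma intE (f : Omega -> R) : P.-integrable setT (EFin \o f) ->
  (\int[P]_w (f w)%:E)%E = (Rintegral P setT f)%:E.
Proof. by move=> fi; rewrite /Rintegral fineK //; exact: integrable_fin_num. Qed.

Lemma PT1 : fine (P setT) = 1.
Proof. by have := probability_setT P; move=> /= ->. Qed.

Lemma Rcst r : Rintegral P setT (fun _ => r) = r.
Proof. by rewrite Rintegral_cst // PT1 mulr1. Qed.

Lemma icst r : P.-integrable setT (EFin \o (fun _ : Omega => r)).
Proof. exact: finite_measure_integrable_cst. Qed.

Lemma TSsc w : TS w -> thl <= sc w <= thh.
Proof. by case. Qed.
Lemma TSth w : TS w -> thl <= theta w <= thh.
Proof. by case. Qed.

Lemma ith : P.-integrable setT (EFin \o theta).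
Proof.
apply: (@iT theta thh mth) => w /TSth /andP[a b].
by rewrite ger0_norm //; apply: le_trans a.
Qed.

Lemma isc : P.-integrable setT (EFin \o sc).
Proof.
apply: (@iT sc thh msc) => w /TSsc /andP[a b].
by rewrite ger0_norm //; apply: le_trans a.
Qed.

Lemma Rth : Rintegral P setT theta = mu.
Proof. by rewrite /Rintegral hmu. Qed.

Lemma Rsc : Rintegral P setT sc = mu.
Proof.
have := @unb setT measurableT; rewrite preimage_setT => e.
by rewrite /Rintegral -e hmu.
Qed.

Lemma mu_bnd : thl <= mu <= thh.
Proof.
have e r : (\int[P]_w (r%:E))%E = r%:E by rewrite intE ?Rcst //; exact: icst.
apply/andP; split; rewrite -lee_fin -hmu.
- rewrite -[X in (X <= _)%E]e; apply: leT; [exact: icst|exact: ith|].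
  by move=> w /TSth /andP[].
- rewrite -[X in (_ <= X)%E]e; apply: leT; [exact: ith|exact: icst|].
  by move=> w /TSth /andP[].
Qed.

Lemma part2 :
  ((\int[distribution P sc]_(s in `[(mu + phid)%R, thh]) (s - (mu + phid))%:E <= phit%:E)%E ->
     exists dsc pN, equilibrium theta sc thl thh phit phid 0 dsc pN).
Proof.
move=> hG.
set c := mu + phid.
pose J : set R := [set` `[c, thh]].
have mJ : measurable J by exact: measurable_itv.
pose dsc := (\1_J : R -> R).
have mdsc : measurable_fun setT dsc by exact: measurable_indic.
have jv s : \1_J s = if (c <= s <= thh) then 1 else 0 :> R.
  by rewrite indicE /J mem_setE in_itv /=; case: ifP.
pose Jf w := \1_J (sc w) * (sc w - c).
have mJf : measurable_fun setT Jf.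
  apply: measurable_funM; first exact: measurableT_comp mdsc msc.
  by apply: measurable_funB => //; exact: measurable_cst.
have iJf : P.-integrable setT (EFin \o Jf).
  apply: (@iT Jf (thh + `|c|) mJf) => w /TSsc /andP[a b].
  rewrite /Jf jv; case: ifP => _; last by rewrite mul0r normr0 addr_ge0 // (le_trans thl0) // (le_trans a).
  rewrite mul1r; apply: le_trans (ler_normB _ _) _; apply: lerD => //.
  by rewrite ger0_norm // (le_trans thl0).
have XG : (\int[distribution P sc]_(s in J) (s - c)%:E = (Rintegral P setT Jf)%:E)%E.
  rewrite -intE //.
  have -> : (\int[distribution P sc]_(s in J) (s - c)%:E = \int[distribution P sc]_s ((\1_J s * (s - c))%:E))%E.
    rewrite integral_mkcond; apply: eq_integral => s _; rewrite patchE indicE.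
    by case: ifP => _; rewrite ?mul1r ?mul0r.
  rewrite ge0_integral_distribution //.
    apply/measurable_EFinP; apply: measurable_funM; first exact: mdsc.
    by apply: measurable_funB => //; exact: measurable_cst.
  move=> s; rewrite lee_fin jv; case: ifP => [/andP[h _]|_]; last by rewrite mul0r.
  by rewrite mul1r subr_ge0.
rewrite XG lee_fin in hG.
exists dsc, mu; split.
- by rewrite lexx ler01.
- split => // s; rewrite /dsc jv; case: ifP => _; by rewrite ?lexx ?ler01.
- move=> s /andP[s1 s2]; rewrite /dsc jv; case: ifP => h; split => //; rewrite ?ltxx ?ltr01 //.
  + by move=> _; move: h => /andP[h _]; rewrite /c in h; lra.
  + move=> _; have : ~~ (c <= s) by apply: contraFN h => hc; rewrite hc s2.
    by rewrite -ltNge /c => hh; lra.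
- split; first by rewrite ltxx.
  move=> _; rewrite /test_payoff.
  have -> : (\int[P]_w ((dsc (sc w) * (sc w - phid) + (1 - dsc (sc w)) * mu)%:E) =
            \int[P]_w ((mu + Jf w)%:E))%E.
    by apply: eq_integral => w _; rewrite /Jf /dsc /c; congr EFin; ring.
  rewrite intE; last first.
    apply: (integrableD measurableT (icst mu) iJf).
  rewrite RintegralD //; [|exact: icst].
  by rewrite Rcst -EFinD lee_fin; lra.
- split; first exact: mu_bnd.
  move=> _; rewrite /prob_null /value_null subr0 mul0e adde0 mul1e mul0e adde0 hmu.
  by rewrite mule1.
Qed.

Lemma unbB B : measurable B ->
  (\int[P]_w (theta w * \1_B (sc w))%:E = \int[P]_w (sc w * \1_B (sc w))%:E)%E.
Proof.
move=> mB.
have e (f : Omega -> R) : (\int[P]_w (f w * \1_B (sc w))%:E = \int[P]_(w in sc @^-1` B) (f w)%:E)%E.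
  rewrite [RHS]integral_mkcond; apply: eq_integral => w _; rewrite patchE indicE.
  have -> : (w \in sc @^-1` B) = (sc w \in B) by apply/idP/idP => /set_mem h; exact/mem_set.
  by case: ifP => _; rewrite ?mulr1 ?mulr0.
by rewrite !e unb.
Qed.

Lemma part1 :
  ((phit%:E < \int[distribution P sc]_(s in `[(mu + phid)%R, thh]) (s - (mu + phid))%:E)%E ->
     forall tau dsc pN, equilibrium theta sc thl thh phit phid tau dsc pN -> tau = 1).
Proof.
move=> hG tau dsc pN [/andP[t0 t1] [mdsc hd01] hdisc [ht1 ht2] [/andP[pl ph] hbayes]].
set c := mu + phid.
pose J : set R := [set` `[c, thh]].
have mJ : measurable J by exact: measurable_itv.
have mJi : measurable_fun setT (\1_J : R -> R) by exact: measurable_indic.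
have jv s : \1_J s = if (c <= s <= thh) then 1 else 0 :> R.
  by rewrite indicE /J mem_setE in_itv /=; case: ifP.
pose Jf w := \1_J (sc w) * (sc w - c).
have mJf : measurable_fun setT Jf.
  apply: measurable_funM; first exact: measurableT_comp mJi msc.
  by apply: measurable_funB => //; exact: measurable_cst.
have iJf : P.-integrable setT (EFin \o Jf).
  apply: (@iT Jf (thh + `|c|) mJf) => w /TSsc /andP[a b].
  rewrite /Jf jv; case: ifP => _; last by rewrite mul0r normr0 addr_ge0 // (le_trans thl0) // (le_trans a).
  rewrite mul1r; apply: le_trans (ler_normB _ _) _; apply: lerD => //.
  by rewrite ger0_norm // (le_trans thl0).
have XG : (\int[distribution P sc]_(s in J) (s - c)%:E = (Rintegral P setT Jf)%:E)%E.
  rewrite -intE //.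
  have -> : (\int[distribution P sc]_(s in J) (s - c)%:E = \int[distribution P sc]_s ((\1_J s * (s - c))%:E))%E.
    rewrite integral_mkcond; apply: eq_integral => s _; rewrite patchE indicE.
    by case: ifP => _; rewrite ?mul1r ?mul0r.
  rewrite ge0_integral_distribution //.
    apply/measurable_EFinP; apply: measurable_funM; first exact: mJi.
    by apply: measurable_funB => //; exact: measurable_cst.
  move=> s; rewrite lee_fin jv; case: ifP => [/andP[h _]|_]; last by rewrite mul0r.
  by rewrite mul1r subr_ge0.
rewrite XG lte_fin in hG.
have [tl1|] := ltP tau 1; last by move=> h; apply/eqP; rewrite eq_le t1 h.
exfalso.
have mdsc' : measurable_fun setT (fun w => dsc (sc w)) by exact: measurableT_comp mdsc msc.
have muN : mu < pN.
  rewrite ltNge; apply/negP => hpm.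
  have := ht2 tl1; rewrite /test_payoff.
  pose Iw w := dsc (sc w) * (sc w - phid) + (1 - dsc (sc w)) * pN.
  have mI : measurable_fun setT Iw.
    apply: measurable_funD; apply: measurable_funM => //.
    - by apply: measurable_funB => //; exact: measurable_cst.
    - by apply: measurable_funB => //; exact: measurable_cst.
  have iI : P.-integrable setT (EFin \o Iw).
    apply: (@iT Iw (thh + `|phid| + `|pN|) mI) => w /TSsc /andP[a b].
    apply: le_trans (@bnd_mix R (dsc (sc w)) (sc w - phid) pN (hd01 (sc w))) _; apply: lerD => //.
    apply: le_trans (ler_normB _ _) _; apply: lerD => //.
    by rewrite ger0_norm // (le_trans thl0).
  have -> : (\int[P]_w ((dsc (sc w) * (sc w - phid) + (1 - dsc (sc w)) * pN)%:E) = (Rintegral P setT Iw)%:E)%E.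
    by rewrite -intE.
  have le1 : (\int[P]_w ((pN + Jf w)%:E) <= \int[P]_w ((Iw w)%:E))%E.
    apply: leT => //; first exact: (integrableD measurableT (icst pN) iJf).
    move=> w /TSsc /andP[a b].
    have hh := hdisc (sc w) (introT andP (conj a b)).
    have := @ptA R (sc w) (dsc (sc w)) pN mu phid (hd01 _) hpm hh.1 hh.2.
    by rewrite /Jf jv b andbT; case: ifP => _; rewrite ?mul1r ?mul0r.
  have e1 : (\int[P]_w ((pN + Jf w)%:E))%E = (pN + Rintegral P setT Jf)%:E.
    rewrite intE; last exact: (integrableD measurableT (icst pN) iJf).
    by rewrite RintegralD //; [rewrite Rcst | exact: icst].
  rewrite e1 intE // lee_fin in le1.
  by rewrite -EFinD lee_fin => le2; lra.
pose g w := 1 - dsc (sc w).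
have mg : measurable_fun setT g.
  by apply: measurable_funB => //; exact: measurable_cst.
have ig : P.-integrable setT (EFin \o g).
  apply: (@iT g 1 mg) => w _; have /andP[a b] := hd01 (sc w).
  by rewrite /g ger0_norm ?subr_ge0 // lerBlDr lerDl.
pose q := Rintegral P setT g.
have q0 : 0 <= q by apply: Rintegral_ge0 => w _; have /andP[a b] := hd01 (sc w); rewrite /g subr_ge0.
have q1 : q <= 1.
  rewrite -(Rcst 1); apply: le_Rintegral => //; first exact: icst.
  by move=> w _; have /andP[a b] := hd01 (sc w); rewrite /g lerBlDr lerDl.
pose tg w := theta w * g w.
have mtg : measurable_fun setT tg by exact: measurable_funM.
have itg : P.-integrable setT (EFin \o tg).
  apply: (@iT tg thh mtg) => w /TSth /andP[a b]; have /andP[d0 d1] := hd01 (sc w).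
  rewrite /tg /g normrM !ger0_norm ?subr_ge0 ?(le_trans thl0) //.
  apply: le_trans b; rewrite -[leRHS]mulr1 ler_wpM2l ?(le_trans thl0) //.
  by rewrite lerBlDr lerDl.
pose A := Rintegral P setT tg.
have pos : (0 < prob_null sc tau dsc)%E.
  rewrite /prob_null (_ : (\int[P]_w ((1 - dsc (sc w))%:E) = q%:E)%E); last by rewrite -intE.
  by rewrite -EFinM -EFinD lte_fin; nra.
have hB := hbayes pos.
rewrite /prob_null /value_null (_ : (\int[P]_w ((1 - dsc (sc w))%:E) = q%:E)%E) in hB; last by rewrite -intE.
rewrite (_ : (\int[P]_w ((theta w * (1 - dsc (sc w)))%:E) = A%:E)%E) in hB; last by rewrite -intE.
rewrite hmu -!EFinM -!EFinD in hB; case: hB => hB.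
have AQ : A <= mu * q.
  set cc := pN + phid.
  pose be := 1 - dsc cc.
  have be01 : 0 <= be <= 1.
    by have /andP[d0 d1] := hd01 cc; rewrite /be subr_ge0 d1 lerBlDr lerDl d0.
  pose L : set R := [set` `]-oo, cc[].
  pose E1 : set R := [set cc].
  have mL : measurable L by exact: measurable_itv.
  have mE : measurable E1 by exact: measurable_set1.
  have mLi : measurable_fun setT (\1_L : R -> R) by exact: measurable_indic.
  have mEi : measurable_fun setT (\1_E1 : R -> R) by exact: measurable_indic.
  have Lv s : \1_L s = if s < cc then 1 else 0 :> R.
    by rewrite indicE /L mem_setE in_itv /=; case: ifP.
  have Ev s : \1_E1 s = if s == cc then 1 else 0 :> R.
    by rewrite indicE /E1 in_set1; case: ifP.
  pose h w := \1_L (sc w) + be * \1_E1 (sc w).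
  have mh : measurable_fun setT h.
    apply: measurable_funD; first exact: measurableT_comp mLi msc.
    apply: measurable_funM; first exact: measurable_cst.
    exact: measurableT_comp mEi msc.
  have hb w : 0 <= h w <= 1.
    rewrite /h Lv Ev; have [lt|gt|eq] := ltgtP (sc w) cc.
    - by rewrite mulr0 addr0 lexx ler01.
    - by rewrite mulr0 addr0 lexx ler01.
    - by rewrite mulr1 add0r.
  have ih : P.-integrable setT (EFin \o h).
    apply: (@iT h 1 mh) => w _; have /andP[a b] := hb w.
    by rewrite ger0_norm.
  have iFk (f k : Omega -> R) : measurable_fun setT f -> measurable_fun setT k ->
      (forall w, TS w -> 0 <= f w <= thh) -> (forall w, 0 <= k w <= 1) ->
      P.-integrable setT (EFin \o (fun w => f w * k w)).
    move=> mf mk hf hk; apply: (@iT _ thh); first exact: measurable_funM.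
    move=> w Tw; have /andP[a b] := hf w Tw; have /andP[c0 c1] := hk w.
    rewrite normrM !ger0_norm //; apply: le_trans b.
    by rewrite -[leRHS]mulr1 ler_wpM2l.
  have indb (B : set R) s : 0 <= (\1_B s : R) <= 1.
    by rewrite indicE; case: (s \in B); rewrite ?lexx ?ler01.
  have thb w : TS w -> 0 <= theta w <= thh.
    by move=> /TSth /andP[a b]; rewrite b (le_trans thl0 a).
  have scb w : TS w -> 0 <= sc w <= thh.
    by move=> /TSsc /andP[a b]; rewrite b (le_trans thl0 a).
  have gh w : TS w -> g w = h w.
    move=> /TSsc /andP[a b]; have [hd1 hd2] := hdisc (sc w) (introT andP (conj a b)).
    have /andP[d0 d1] := hd01 (sc w).
    rewrite /g /h Lv Ev; have [lt|gt|eq] := ltgtP (sc w) cc.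
    - have -> : dsc (sc w) = 0.
        apply/eqP; rewrite eq_le d0 andbT leNgt; apply/negP => /hd1.
        by rewrite /cc in lt; lra.
      by rewrite mulr0 addr0 subr0.
    - have -> : dsc (sc w) = 1.
        apply/eqP; rewrite eq_le d1 /= leNgt; apply/negP => /hd2.
        by rewrite /cc in gt; lra.
      by rewrite mulr0 addr0 subrr.
    - by rewrite mulr1 add0r /be eq.
  have eq_q : q = Rintegral P setT h.
    by rewrite /q /Rintegral (@aeI g h mg mh gh).
  have mth' : measurable_fun setT theta := mth.
  have eq_A : A = Rintegral P setT (fun w => theta w * h w).
    rewrite /A /Rintegral; congr fine; apply: aeI.
    - exact: mtg.
    - exact: measurable_funM.
    - by move=> w Tw; rewrite /tg gh.
  have lin (f : Omega -> R) : measurable_fun setT f -> (forall w, TS w -> 0 <= f w <= thh) ->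
      Rintegral P setT (fun w => f w * h w) =
      Rintegral P setT (fun w => f w * \1_L (sc w)) + be * Rintegral P setT (fun w => f w * \1_E1 (sc w)).
    move=> mf hf.
    have i1 := iFk f (fun w => \1_L (sc w)) mf (measurableT_comp mLi msc) hf (fun w => indb L (sc w)).
    have i2 := iFk f (fun w => \1_E1 (sc w)) mf (measurableT_comp mEi msc) hf (fun w => indb E1 (sc w)).
    rewrite -RintegralZl // -RintegralD //; last exact: (integrableZl measurableT be i2).
    by apply: eq_Rintegral => w _; rewrite /h; ring.
  have tsc : A = Rintegral P setT (fun w => sc w * h w).
    rewrite eq_A (lin theta mth thb) (lin sc msc scb).
    by rewrite /Rintegral !unbB.
  have isch : P.-integrable setT (EFin \o (fun w => sc w * h w)).
    by apply: iFk => //; exact: scb.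
  have iq : P.-integrable setT (EFin \o (fun w => q * sc w)) := integrableZl measurableT q isc.
  have ich : P.-integrable setT (EFin \o (fun w => cc * h w)) := integrableZl measurableT cc ih.
  have iqc : P.-integrable setT (EFin \o (fun w => q * sc w + cc * h w)) := integrableD measurableT iq ich.
  have le : A <= Rintegral P setT (fun w => q * sc w + cc * h w - cc * q).
    rewrite tsc; apply: le_Rintegral => //.
    - exact: (integrableB measurableT iqc (icst (cc * q))).
    move=> w _; apply: ptC; first by rewrite q0 q1.
    - by move=> lt; rewrite /h Lv Ev lt (lt_eqF lt) mulr0 addr0.
    - by move=> gt; rewrite /h Lv Ev ltNge (ltW gt) (gt_eqF gt) /= mulr0 addr0.
  rewrite RintegralB // ?RintegralD // ?RintegralZl // ?Rcst ?Rsc -?eq_q in le; try exact: icst; try exact: isc.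
  lra.
have k0 : 0 < 1 - tau + tau * q by nra.
have h1 : tau * A <= tau * (mu * q) by rewrite ler_wpM2l.
have h2 : 0 < (pN - mu) * (1 - tau + tau * q) by rewrite mulr_gt0 // subr_gt0.
nra.
Qed.

End Main.

Theorem lemma1 (R : realType) (dd : measure_display) (Omega : measurableType dd)
    (P : probability Omega R) (theta sc : {RV P >-> R})
    (thl thh mu phit phid : R) :
  0 <= thl -> thl < thh ->
  (* F = law of theta: support in [thl, thh] with extreme points thl, thh *)
  P [set w | thl <= theta w <= thh] = 1%E ->
  (forall e, 0 < e -> (0 < P [set w | (theta w < thl + e)%R])%E) ->
  (forall e, 0 < e -> (0 < P [set w | (thh - e < theta w)%R])%E) ->
  (* mu is the mean of F *)
  (\int[P]_w (theta w)%:E)%E = mu%:E ->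
  (* the test: scores lie in [thl, thh] and the test is unbiased, E[theta | s] = s *)
  P [set w | thl <= sc w <= thh] = 1%E ->
  (forall B : set R, measurable B ->
     (\int[P]_(w in sc @^-1` B) (theta w)%:E = \int[P]_(w in sc @^-1` B) (sc w)%:E)%E) ->
  let G := distribution P sc in
  ((phit%:E < \int[G]_(s in `[(mu + phid)%R, thh]) (s - (mu + phid))%:E)%E ->
     forall tau dsc pN, equilibrium theta sc thl thh phit phid tau dsc pN -> tau = 1)
  /\
  ((\int[G]_(s in `[(mu + phid)%R, thh]) (s - (mu + phid))%:E <= phit%:E)%E ->
     exists dsc pN, equilibrium theta sc thl thh phit phid 0 dsc pN).
Proof.
move=> thl0 thlh Pt _ _ hmu Ps unb G; split.
- exact: (@part1 R dd Omega P theta sc thl thh mu phit phid thl0 Pt hmu Ps unb).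
- exact: (@part2 R dd Omega P theta sc thl thh mu phit phid thl0 Pt hmu Ps).
Qed.
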